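(* Let $G$ be a graph on $n$ vertices which is neither the empty (edgeless) graph nor the complete graph. Then \[\operatorname{scp}(G)+\operatorname{scp}(\overline{G})\ \ge\ 3n-3,\] and equality holds if and only if $G$ or $\overline{G}$ contains a clique of size $n-1$.
   Context: A clique partition of a graph $G$ is a family $\mathcal{C}$ of cliques (sets of pairwise adjacent vertices) of $G$ such that every edge of $G$ has both endpoints in exactly one member of $\mathcal{C}$. The sigma clique partition number $\operatorname{scp}(G)$ is the minimum of $\sum_{C\in\mathcal{C}}|C|$ over all clique partitions $\mathcal{C}$ of $G$. $\overline{G}$ denotes the complement of $G$. *)

(* Defs.v *)
From mathcomp Require Import all_boot all_order.
Set Implicit Arguments. Unset Strict Implicit. Unset Printing Implicit Defensive.

Definition simple_graph (T : finType) (e : rel T) : Prop :=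
  symmetric e /\ irreflexive e.

Definition gcompl (T : finType) (e : rel T) : rel T :=
  fun x y => (x != y) && ~~ e x y.

Definition is_clique (T : finType) (e : rel T) (C : {set T}) : bool :=
  [forall x in C, forall y in C, (x != y) ==> e x y].

Definition clique_partition (T : finType) (e : rel T) (P : {set {set T}}) : bool :=
  [forall C in P, is_clique e C] &&
  [forall x, forall y, e x y ==> (#|[set C in P | (x \in C) && (y \in C)]| == 1)].

Definition cp_weight (T : finType) (P : {set {set T}}) : nat := \sum_(C in P) #|C|.

(* The trivial clique partition into edges (used only as the start value of
   the minimum; it is a clique partition of every simple graph). *)
Definition edge_family (T : finType) (e : rel T) : {set {set T}} :=
  [set [set p.1; p.2] | p in [set p : T * T | e p.1 p.2]].

Definition scp (T : finType) (e : rel T) : nat :=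
  \big[minn/cp_weight (edge_family e)]_(P : {set {set T}} | clique_partition e P)
     cp_weight P.

Definition has_clique_of_size (T : finType) (e : rel T) (k : nat) : Prop :=
  exists C : {set T}, is_clique e C && (#|C| == k).

(* Main.v *)
From mathcomp Require Import all_boot all_order.
Require Import Defs.
From mathcomp Require Import zify.
Set Implicit Arguments. Unset Strict Implicit. Unset Printing Implicit Defensive.

Lemma card3 (T : finType) (a b c : T) : a != b -> a != c -> b != c -> #|[set a; b; c]| = 3.
Proof. move=> ab ac bc. rewrite -setUA !cardsU1 cards1 !inE. rewrite (negbTE ab) (negbTE ac) (negbTE bc) //. Qed.

Lemma arith1 n k m a b c d : k + m = n -> 3 <= k -> k*3 <= a + c -> c <= 1 -> d <= b -> 3*m <= d -> 3*n-2 <= a + b.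
Proof. lia. Qed.

Definition rr (T : finType) (F : {set {set T}}) (x : T) := #|[set C in F | x \in C]|.

Lemma dcount (T : finType) (F : {set {set T}}) :
  \sum_(C in F) #|C| = \sum_x rr F x.
Proof.
rewrite /rr.
under eq_bigr do rewrite -sum1_card.
rewrite (exchange_big_dep xpredT) //=.
apply: eq_bigr => x _; rewrite -sum1_card; apply: eq_bigl => C; by rewrite inE.
Qed.

Definition line (T : finType) (F : {set {set T}}) (x y : T) : {set T} :=
  odflt set0 [pick C in F | (x \in C) && (y \in C)].

Lemma lineP (T : finType) (F : {set {set T}}) x y :
  (exists C, [&& C \in F, x \in C & y \in C]) ->
  [/\ line F x y \in F, x \in line F x y & y \in line F x y].
Proof.
move=> [C HC]; rewrite /line; case: pickP => [D /and3P[-> -> ->] //|/(_ C)].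
by rewrite HC.
Qed.

Lemma rr_ge (T : finType) (F : {set {set T}}) x (S : {set T}) :
  (forall s, s \in S -> exists C, [&& C \in F, x \in C & s \in C]) ->
  (forall C s t, C \in F -> x \in C -> s \in S -> t \in S -> s \in C -> t \in C -> s = t) ->
  #|S| <= rr F x.
Proof.
move=> Hex Huniq.
have Hl : forall s, s \in S -> [/\ line F x s \in F, x \in line F x s & s \in line F x s].
  by move=> s /Hex /lineP.
rewrite -(@card_in_imset _ _ (line F x) S).
  apply: subset_leq_card; apply/subsetP => C /imsetP [s sS ->].
  by case: (Hl s sS) => H1 H2 _; rewrite inE H1 H2.
move=> s t sS tS E.
case: (Hl s sS) => H1 H2 H3; case: (Hl t tS) => _ _ H4.
by apply: (Huniq (line F x s)) => //; rewrite E.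
Qed.
Lemma ls_bound (T : finType) (F : {set {set T}}) :
 (forall x y, x != y -> exists C, [&& C \in F, x \in C & y \in C]) ->
 (forall x y C D, x != y -> C \in F -> D \in F -> x \in C -> y \in C -> x \in D -> y \in D -> C = D) ->
 (forall C, C \in F -> #|C| < #|T|) ->
 (exists x y : T, x != y) ->
 3 * #|T| - 3 <= \sum_(C in F) #|C| /\
 (\sum_(C in F) #|C| <= 3 * #|T| - 3 -> exists2 C, C \in F & #|C| = #|T|.-1).
Proof.
move=> H1 H2 H3 [x0 [y0 xy0]].
set n := #|T| in H3 *.
have [C0 /and3P[C0F xC0 yC0]] := H1 _ _ xy0.
case: (arg_maxnP (fun C : {set T} => #|C|) C0F) => B BF Bmax.
have BF' : B \in F := BF.
have k2 : 2 <= #|B|.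
  apply: leq_trans (Bmax _ C0F).
  have := cards2 x0 y0; rewrite xy0 => <-.
  by apply: subset_leq_card; apply/subsetP=> z; rewrite !inE => /orP[] /eqP ->.
have kn := H3 _ BF.
have cC : #|B| + #|~: B| = n := cardsC B.
have ln x y : x != y -> [/\ line F x y \in F, x \in line F x y & y \in line F x y].
  by move=> /H1 /lineP.
have [y1 y1B] : exists y, y \notin B.
  case: (pickP (fun y => y \notin B)) => [y Hy|allB]; first by exists y.
  have : B = setT by apply/setP => y; rewrite inE; have := allB y => /negbFE.
  by move=> E; move: kn; rewrite /n E cardsT ltnn.
have outB x : x \notin B -> #|B| <= rr F x.
  move=> xB; apply: rr_ge.
  - by move=> s sB; apply: H1; apply: contraNneq xB => ->.
  - move=> C s t CF xC sB tB sC tC; apply/eqP; apply: contraNT xB => st.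
    by rewrite -(H2 _ _ _ _ st CF BF sC tC sB tB).
have inB x : x \in B -> 2 <= rr F x.
  move=> xB; have xy : x != y1 by apply: contraNneq y1B => <-.
  case: (ln _ _ xy) => LF xL yL.
  have BL : B != line F x y1 by apply: contraNneq y1B => E; rewrite E.
  have := cards2 B (line F x y1); rewrite BL => <-.
  apply: subset_leq_card; apply/subsetP=> C; rewrite !inE.
  by case/orP => /eqP ->; rewrite ?BF' ?xB ?LF ?xL.
have sumOut : #|~: B| * #|B| <= \sum_(x | x \notin B) rr F x.
  rewrite -sum_nat_const (eq_bigl (fun x => x \notin B)); last by move=> x; rewrite inE.
  apply: leq_sum => x; exact: outB.
rewrite dcount (bigID (mem B)) /=.
have [km|km] := boolP (#|B| == n.-1).
  have sumIn : #|B| * 2 <= \sum_(x | x \in B) rr F x.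
    rewrite -sum_nat_const; apply: leq_sum => x; exact: inB.

  split; last by move=> _; exists B => //; apply/eqP.
  move/eqP: km => km.
  have m1 : #|~: B| = 1 by lia.
  rewrite m1 mul1n in sumOut.  lia.
have m2 : 2 <= #|~: B| by lia.
have sumIn2 : #|B| * 2 <= \sum_(x | x \in B) rr F x.
  rewrite -sum_nat_const; apply: leq_sum => x; exact: inB.
suff bigS : 3 * n - 2 <= \sum_(i in B) rr F i + \sum_(i | i \notin B) rr F i.
  by split; [lia | move=> H; lia].
have [k2e|k3] := boolP (#|B| == 2).
  have all x : n.-1 <= rr F x.
    rewrite /n -(cardsC1 x); apply: rr_ge.
    - by move=> s; rewrite !inE eq_sym => /H1.
    - move=> C s t CF xC; rewrite !inE => sx tx sC tC.
      case: (eqVneq s t) => // st.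
      have : #|[set x; s; t]| <= #|C|.
        by apply: subset_leq_card; apply/subsetP=> w; rewrite !inE => /orP[/orP[]|] /eqP ->.
      rewrite card3 ?(eq_sym x) //.
      by move=> /leq_trans /(_ (Bmax _ CF)); move/eqP: k2e => ->.
  have s1 : #|B| * n.-1 <= \sum_(x | x \in B) rr F x.
    by rewrite -sum_nat_const; apply: leq_sum => x _; exact: all.
  have s2 : #|~: B| * n.-1 <= \sum_(x | x \notin B) rr F x.
    rewrite -sum_nat_const (eq_bigl (fun x => x \notin B)); last by move=> x; rewrite inE.
    by apply: leq_sum => x _; exact: all.
  move/eqP: k2e => k2e.
  have n4 : 4 <= n by lia.
  have e1 : #|B| * n.-1 + #|~: B| * n.-1 = n * n.-1 by rewrite -mulnDl cC.
  have e2 : n * 3 <= n * n.-1 by apply: leq_mul => //; lia.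
  lia.
have k3' : 3 <= #|B| by move: k3 k2; case: #|B| => [|[|[|k]]].
have [z zB zy] : exists2 z, z \notin B & z != y1.
  case: (pickP (fun z => (z \notin B) && (z != y1))) => [z /andP[zB zy]|none].
    by exists z.
  have : #|~: B| <= #|[set y1]|.
    apply: subset_leq_card; apply/subsetP => w; rewrite !inE => wB.
    by move: (none w); rewrite wB /= => /negbFE.
  by rewrite cards1; lia.
have yz : y1 != z by rewrite eq_sym.
case: (ln _ _ yz) => LF yL zL.
set L := line F y1 z in LF yL zL.
have BLu b1 b2 : b1 \in B -> b2 \in B -> b1 \in L -> b2 \in L -> b1 = b2.
  move=> b1B b2B b1L b2L; case: (eqVneq b1 b2) => // ne.
  have E := H2 _ _ _ _ ne BF' LF b1B b2B b1L b2L.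
  by move: y1B; rewrite E yL.
have three b : b \in B -> b \notin L -> 3 <= rr F b.
  move=> bB bL.
  have by1 : b != y1 by apply: contraNneq y1B => <-.
  have bz : b != z by apply: contraNneq zB => <-.
  case: (ln _ _ by1) => L1F bL1 yL1.
  case: (ln _ _ bz) => L2F bL2 zL2.
  have BL1 : B != line F b y1 by apply: contraNneq y1B => E; rewrite E.
  have BL2 : B != line F b z by apply: contraNneq zB => E; rewrite E.
  have L12 : line F b y1 != line F b z.
    apply: contraNneq bL => E.
    have zL1 : z \in line F b y1 by rewrite E.
    have E2 := H2 _ _ _ _ yz L1F LF yL1 zL1 yL zL.
    by rewrite -E2.
  rewrite -(card3 BL1 BL2 L12).
  apply: subset_leq_card; apply/subsetP=> C; rewrite !inE.
  by case/orP => [/orP[]|] /eqP ->; rewrite ?BF' ?bB ?L1F ?L2F ?bL1 ?bL2.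
have sB : \sum_(i in B) (3:nat) <= \sum_(i in B) (rr F i + (i \in L)).
  apply: leq_sum => x xB; case xL: (x \in L).
    by rewrite addn1; apply: inB.
  by rewrite addn0; apply: three => //; rewrite xL.
rewrite big_split /= sum_nat_const in sB.
have cL : \sum_(i in B) (i \in L) <= 1.
  have -> : \sum_(i in B) (i \in L) = #|[set i | (i \in B) && (i \in L)]|.
    rewrite -sum1dep_card big_mkcondr /=; apply: eq_bigr => x _; by case: (x \in L).
  apply/card_le1_eqP => b1 b2; rewrite !inE => /andP[b1B b1L] /andP[b2B b2L].
  exact: BLu.
have e3 : 3 * #|~: B| <= #|~: B| * #|B| by rewrite mulnC; apply: leq_mul.
exact: (arith1 cC k3' sB cL sumOut e3).
Qed.

Lemma sumU (I : finType) (A B : {set I}) (f : I -> nat) :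
  \sum_(i in A :|: B) f i <= \sum_(i in A) f i + \sum_(i in B) f i.
Proof.
rewrite [\sum_(i in A) _]big_mkcond [\sum_(i in B) _]big_mkcond [\sum_(i in A :|: B) _]big_mkcond -big_split /=; apply: leq_sum => i _; rewrite inE.
by case: (i \in A); case: (i \in B) => //=; rewrite ?leq_addr ?leq_addl.
Qed.

Lemma clique_edge (T : finType) (R : rel T) C x y :
  is_clique R C -> x \in C -> y \in C -> x != y -> R x y.
Proof.
move=> /forallP /(_ x) /implyP Hx xC yC xy.
by move: (Hx xC) => /forallP /(_ y) /implyP /(_ yC) /implyP /(_ xy).
Qed.

Lemma pair_clique (T : finType) (R : rel T) a b :
  symmetric R -> R a b -> is_clique R [set a; b].
Proof.
move=> sym ab; apply/forallP => x; apply/implyP; rewrite !inE => hx.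
apply/forallP => y; apply/implyP; rewrite !inE => hy; apply/implyP => xy.
move: xy; case/orP: hx => /eqP ->; case/orP: hy => /eqP -> //; rewrite ?eqxx //.
by rewrite sym.
Qed.

Lemma gcompl_simple (T : finType) (e : rel T) : simple_graph e -> simple_graph (gcompl e).
Proof.
move=> [sym irr]; split.
- by move=> x y; rewrite /gcompl eq_sym sym.
- by move=> x; rewrite /gcompl eqxx.
Qed.

Lemma edge_cp (T : finType) (e : rel T) : simple_graph e -> clique_partition e (edge_family e).
Proof.
move=> [sym irr]; apply/andP; split.
- apply/forallP => C; apply/implyP => /imsetP [p]; rewrite inE => ep ->.
  exact: pair_clique.
- apply/forallP => x; apply/forallP => y; apply/implyP => exy.
  have xy : x != y by apply: contraTneq exy => ->; rewrite irr.
  apply/cards1P; exists [set x; y]; apply/setP => C; rewrite !inE.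
  apply/idP/idP.
  + case/andP => /imsetP [p]; rewrite inE => ep -> /andP[hx hy].
    rewrite eq_sym eqEcard; apply/andP; split.
      by apply/subsetP => w /set2P [] ->.
    by rewrite (cards2 x y) xy (cards2 p.1 p.2); case: (p.1 != p.2).
  + move/eqP ->; rewrite !inE !eqxx orbT andbT /=.
    rewrite andbT /edge_family; apply/imsetP; exists (x, y) => //; by rewrite inE.
Qed.

Lemma bigmin_le (I : finType) (p : pred I) (f : I -> nat) x0 j :
  p j -> \big[minn/x0]_(i | p i) f i <= f j.
Proof.
move=> pj; move: (mem_index_enum j); elim: (index_enum I) => // a r IH.
rewrite inE big_cons; case/orP => [/eqP <-|jr]; first by rewrite pj geq_minl.
case: (p a) => //; last exact: IH.
by rewrite geq_min (IH jr) orbT.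
Qed.

Lemma scp_le (T : finType) (e : rel T) P : clique_partition e P -> scp e <= cp_weight P.
Proof. move=> HP; rewrite /scp; exact: bigmin_le. Qed.

Lemma scp_attained (T : finType) (e : rel T) : simple_graph e ->
  exists P, clique_partition e P /\ scp e = cp_weight P.
Proof.
move=> sg; rewrite /scp.
apply: (big_ind (fun v => exists P, clique_partition e P /\ v = cp_weight P)).
- by exists (edge_family e); split => //; exact: edge_cp.
- move=> a b [P [HP ->]] [Q [HQ ->]]; rewrite /minn; case: ltnP => _.
    by exists P.
  by exists Q.
- by move=> P HP; exists P.
Qed.

Lemma cp_ex (T : finType) (R : rel T) P x y : clique_partition R P -> R x y ->
  exists D, [&& D \in P, x \in D & y \in D].
Proof.
move=> /andP[_ /forallP /(_ x) /forallP /(_ y) /implyP H] /H /cards1P [D HD].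
exists D; have : D \in [set D] by rewrite inE.
by rewrite -HD inE.
Qed.

Lemma cp_uniq (T : finType) (R : rel T) P x y D1 D2 : clique_partition R P -> R x y ->
  D1 \in P -> D2 \in P -> x \in D1 -> y \in D1 -> x \in D2 -> y \in D2 -> D1 = D2.
Proof.
move=> /andP[_ /forallP /(_ x) /forallP /(_ y) /implyP H] /H /cards1P [D HD].
move=> D1P D2P x1 y1 x2 y2.
have : D1 \in [set D] by rewrite -HD inE D1P x1 y1.
have : D2 \in [set D] by rewrite -HD inE D2P x2 y2.
by rewrite !inE => /eqP -> /eqP ->.
Qed.

Lemma arith2 c n : c = n.-1 -> 0 < n -> c + c * 2 <= 3 * n - 3.
Proof. lia. Qed.

Lemma upper (T : finType) (e : rel T) (F : {set {set T}}) : simple_graph e ->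
 (forall x y, x != y -> exists C, [&& C \in F, x \in C & y \in C]) ->
 (forall x y C D, x != y -> C \in F -> D \in F -> x \in C -> y \in C -> x \in D -> y \in D -> C = D) ->
 (forall D, D \in F -> is_clique e D || is_clique (gcompl e) D) ->
 scp e + scp (gcompl e) <= \sum_(D in F) #|D|.
Proof.
move=> [sym irr] H1 H2 Hcl.
set P := [set D in F | is_clique e D].
set Q := [set D in F | ~~ is_clique e D].
have -> : \sum_(D in F) #|D| = cp_weight P + cp_weight Q.
  rewrite (bigID (fun D => is_clique e D)) /cp_weight /=.
  congr (_ + _); apply: eq_bigl => D; by rewrite !inE.
apply: leq_add; apply: scp_le; apply/andP; split.
- by apply/forallP => D; apply/implyP; rewrite inE => /andP[_ ->].
- apply/forallP => x; apply/forallP => y; apply/implyP => exy.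
  have xy : x != y by apply: contraTneq exy => ->; rewrite irr.
  case: (H1 x y xy) => D0 /and3P[D0F xD0 yD0].
  have D0c : is_clique e D0.
    case/orP: (Hcl D0 D0F) => // gc.
    by move: (clique_edge gc xD0 yD0 xy); rewrite /gcompl exy andbF.
  apply/cards1P; exists D0; apply/setP => D; rewrite !inE; apply/idP/idP.
    case/andP => /andP[DF _] /andP[xD yD]; apply/eqP.
    exact: (H2 _ _ _ _ xy DF D0F xD yD xD0 yD0).
  by move/eqP ->; rewrite D0F D0c xD0 yD0.
- apply/forallP => D; apply/implyP; rewrite inE => /andP[DF nc].
  by move: (Hcl D DF); rewrite (negbTE nc).
- apply/forallP => x; apply/forallP => y; apply/implyP => gxy.
  have /andP[xy nexy] := gxy.
  case: (H1 x y xy) => D0 /and3P[D0F xD0 yD0].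
  have D0c : ~~ is_clique e D0.
    by apply/negP => c; move: (clique_edge c xD0 yD0 xy); rewrite (negbTE nexy).
  apply/cards1P; exists D0; apply/setP => D; rewrite !inE; apply/idP/idP.
    case/andP => /andP[DF _] /andP[xD yD]; apply/eqP.
    exact: (H2 _ _ _ _ xy DF D0F xD yD xD0 yD0).
  by move/eqP ->; rewrite D0F D0c xD0 yD0.
Qed.

Lemma constr (T : finType) (e : rel T) (C : {set T}) : simple_graph e ->
  is_clique e C || is_clique (gcompl e) C -> #|C| = #|T|.-1 -> 0 < #|T| ->
  scp e + scp (gcompl e) <= 3 * #|T| - 3.
Proof.
move=> sg Ccl Cn n0.
have [sym irr] := sg.
have [gsym _] := gcompl_simple sg.
have cC : #|C| + #|~: C| = #|T| := cardsC C.
have : #|~: C| == 1 by apply/eqP; lia.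
case/cards1P => v Hv.
have vC : v \notin C by rewrite -in_setC Hv set11.
have outv w : w \notin C -> w = v by rewrite -in_setC Hv inE => /eqP.
set F := C |: [set [set v; u] | u in C].
set canon := fun x y : T => if (x \in C) && (y \in C) then C else if x \in C then [set v; x] else [set v; y].
have Hcanon x y D : D \in F -> x \in D -> y \in D -> x != y -> D = canon x y.
  rewrite /F /canon !inE => /orP[/eqP -> xC yC _|/imsetP [u uC ->]]; first by rewrite xC yC.
  have uv : (u == v) = false by apply/negbTE; apply: contraNneq vC => <-.
  rewrite !inE => /orP[]/eqP -> /orP[]/eqP -> //; rewrite ?eqxx // => _.
  - by rewrite (negbTE vC) /=.
  - by rewrite uC (negbTE vC) /=.
have H1 x y : x != y -> exists D, [&& D \in F, x \in D & y \in D].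
  move=> xy; case xC: (x \in C); case yC: (y \in C).
  - by exists C; rewrite /F !inE eqxx xC yC.
  - exists [set v; x]; move: (outv y); rewrite yC => /(_ isT) ->.
    rewrite !inE !eqxx orbT /= andbT; apply/orP; right; apply/imsetP; by exists x.
  - exists [set v; y]; move: (outv x); rewrite xC => /(_ isT) ->.
    rewrite !inE !eqxx orbT /= andbT; apply/orP; right; apply/imsetP; by exists y.
  - move: (outv x) (outv y); rewrite xC yC => /(_ isT) ex /(_ isT) ey.
    by move: xy; rewrite ex ey eqxx.
have H2 x y D1 D2 : x != y -> D1 \in F -> D2 \in F -> x \in D1 -> y \in D1 -> x \in D2 -> y \in D2 -> D1 = D2.
  move=> xy D1F D2F x1 y1 x2 y2.
  by rewrite (Hcanon x y D1) // (Hcanon x y D2).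
have Hcl D : D \in F -> is_clique e D || is_clique (gcompl e) D.
  rewrite /F !inE => /orP[/eqP -> //|/imsetP [u uC ->]].
  have vu : v != u by apply: contraNneq vC => ->.
  case evu: (e v u); first by rewrite pair_clique.
  apply/orP; right; apply: pair_clique => //; by rewrite /gcompl vu evu.
apply: leq_trans (upper sg H1 H2 Hcl) _.
have CnI : C \notin [set [set v; u] | u in C].
  apply/imsetP => [[u uC E]]; by move: vC; rewrite E !inE eqxx.
rewrite /F big_setU1 //= big_imset /=; last first.
  move=> u1 u2 u1C u2C E.
  have : u1 \in [set v; u2] by rewrite -E !inE eqxx orbT.
  rewrite !inE => /orP[/eqP E1|/eqP //]; by move: vC; rewrite -E1 u1C.
have -> : \sum_(u in C) #|[set v; u]| = #|C| * 2.
  rewrite -sum_nat_const; apply: eq_bigr => u uC; rewrite cards2.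
  suff -> : v != u by [].
  by apply: contraNneq vC => ->.
exact: arith2 Cn n0.
Qed.

Theorem mainTheorem3 (T : finType) (e : rel T) :
  simple_graph e ->
  (exists x y, e x y) ->
  (exists x y, gcompl e x y) ->
  3 * #|T| - 3 <= scp e + scp (gcompl e) /\
  (scp e + scp (gcompl e) = 3 * #|T| - 3 <->
     has_clique_of_size e #|T|.-1 \/ has_clique_of_size (gcompl e) #|T|.-1).
Proof.
move=> sg [a [b eab]] [c [d gcd]].
have [sym irr] := sg.
have gsg := gcompl_simple sg.
have ab : a != b by apply: contraTneq eab => ->; rewrite irr.
have [P [HP EP]] := scp_attained sg.
have [Q [HQ EQ]] := scp_attained gsg.
set F := P :|: Q.
have Pc D : D \in P -> is_clique e D by move: HP => /andP[/forallP /(_ D) /implyP].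
have Qc D : D \in Q -> is_clique (gcompl e) D by move: HQ => /andP[/forallP /(_ D) /implyP].
have H1 x y : x != y -> exists C, [&& C \in F, x \in C & y \in C].
  move=> xy; case exy: (e x y).
    case: (cp_ex HP exy) => D /and3P[DP xD yD]; exists D; by rewrite /F inE DP xD yD.
  have gxy : gcompl e x y by rewrite /gcompl xy exy.
  case: (cp_ex HQ gxy) => D /and3P[DQ xD yD]; exists D; by rewrite /F inE DQ xD yD orbT.
have H2 x y C D : x != y -> C \in F -> D \in F -> x \in C -> y \in C -> x \in D -> y \in D -> C = D.
  move=> xy; rewrite /F !inE => CF DF xC yC xD yD.
  case exy: (e x y).
    have nQ E : E \in Q -> x \in E -> y \in E -> False.
      by move=> EQ' xE yE; move: (clique_edge (Qc E EQ') xE yE xy); rewrite /gcompl exy andbF.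
    have CP : C \in P by case/orP: CF => // /nQ; move/(_ xC yC).
    have DP : D \in P by case/orP: DF => // /nQ; move/(_ xD yD).
    exact: (cp_uniq HP exy CP DP).
  have gxy : gcompl e x y by rewrite /gcompl xy exy.
  have nP E : E \in P -> x \in E -> y \in E -> False.
    by move=> EP' xE yE; move: (clique_edge (Pc E EP') xE yE xy); rewrite exy.
  have CQ : C \in Q by case/orP: CF => // /nP; move/(_ xC yC).
  have DQ : D \in Q by case/orP: DF => // /nP; move/(_ xD yD).
  exact: (cp_uniq HQ gxy CQ DQ).
have H3 C : C \in F -> #|C| < #|T|.
  move=> CF; rewrite ltnNge; apply/negP => Cn.
  have CT : C = setT by apply/eqP; rewrite eqEcard subsetT cardsT Cn.
  move: CF; rewrite /F inE CT => /orP[/Pc cl|/Qc cl].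
    have /andP[cd ncd] := gcd.
    by move: (clique_edge cl (in_setT c) (in_setT d) cd); rewrite (negbTE ncd).
  by move: (clique_edge cl (in_setT a) (in_setT b) ab); rewrite /gcompl eab andbF.
have [low eqc] := ls_bound H1 H2 H3 (ex_intro _ a (ex_intro _ b ab)).
have wF : \sum_(C in F) #|C| <= scp e + scp (gcompl e) by rewrite EP EQ; exact: sumU.
have lowS : 3 * #|T| - 3 <= scp e + scp (gcompl e) := leq_trans low wF.
split => //; split.
- move=> E; have : \sum_(C in F) #|C| <= 3 * #|T| - 3 by rewrite -E.
  case/eqc => C; rewrite /F inE => /orP[/Pc cl|/Qc cl] Cn.
    by left; exists C; rewrite cl Cn eqxx.
  by right; exists C; rewrite cl Cn eqxx.
- have n0 : 0 < #|T| by apply/card_gt0P; exists a.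
  move=> H; apply/eqP; rewrite eqn_leq lowS andbT.
  case: H => [[C /andP[cl /eqP Cn]]|[C /andP[cl /eqP Cn]]].
    by apply: (constr sg _ Cn n0); rewrite cl.
  by apply: (constr sg _ Cn n0); rewrite cl orbT.
Qed.
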